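(* Let $c,o\in\{1,\dots,N\}$ and define the polynomial $$h(s)=e_o^{T}\,\operatorname{adj}(sI+L)\,e_c=\sum_{i=0}^{N-1}h_i s^i,$$ that is, the $(o,c)$ entry of the adjugate of $sI+L$. Then for every $i=0,\dots,N-1$, $$h_i=\vartheta\big(\mathcal F_{N-i-1}^{c\to o}\big).$$
   Context: Let $\mathcal G$ be a weighted directed graph on the vertex set $\{1,\dots,N\}$ with adjacency matrix $A=[a_{ij}]$, where $a_{ij}>0$ if there is an arc from $j$ to $i$ and $a_{ij}=0$ otherwise (no self-loops). The weight of that arc is $a_{ij}$. The Laplacian is $L=D-A$ with $D=\mathrm{diag}(\sum_j a_{ij})$. The vector $e_i$ is the $i$-th canonical basis vector, and $I$ is the identity matrix. A diverging (out-)tree is a set of arcs on a vertex subset that has a root vertex of in-degree $0$, has every other vertex of in-degree exactly $1$, and has a directed path from the root to every vertex of the subset. A spanning diverging forest is a set of arcs whose diverging trees partition all $N$ vertices; isolated vertices are trivial trees. The weight of a forest is the product of its arc weights. $\mathcal F_k^{u\to w}$ is the set of all spanning diverging forests with exactly $k$ arcs in which $u$ is the root of a tree containing $w$. The quantity $\vartheta(\mathcal F_k^{u\to w})$ is the sum of the weights of its members; it is $0$ if the set is empty. *)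

(* Defs.v *)
From HB Require Import structures.
From mathcomp Require Import all_boot all_order all_algebra.
Set Implicit Arguments. Unset Strict Implicit. Unset Printing Implicit Defensive.
Import Order.TTheory GRing.Theory Num.Theory.
Local Open Scope ring_scope.

Section Graph.
Variables (R : numDomainType) (N : nat).

(* Adjacency matrix convention: a i j > 0 iff there is an arc j -> i, of weight a i j.
   An arc j -> i is represented by the pair (j, i) : 'I_N * 'I_N. *)

Definition laplacian (a : 'M[R]_N) : 'M[R]_N :=
  \matrix_(i, j) ((i == j)%:R * (\sum_(k < N) a i k) - a i j).

Definition arcrel (F : {set 'I_N * 'I_N}) : rel 'I_N := fun x y => (x, y) \in F.

Definition indeg (F : {set 'I_N * 'I_N}) (v : 'I_N) : nat :=
  #|[set u | (u, v) \in F]|.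

(* The diverging trees are then the sets of vertices
   reached from each root. *)
Definition spanning_div_forest (a : 'M[R]_N) (F : {set 'I_N * 'I_N}) : bool :=
  [&& [forall e in F, 0 < a e.2 e.1],
      [forall v, (indeg F v <= 1)%N] &
      [forall w, exists r, (indeg F r == 0)%N && connect (arcrel F) r w]].

Definition root_of (F : {set 'I_N * 'I_N}) (u w : 'I_N) : bool :=
  (indeg F u == 0)%N && connect (arcrel F) u w.

Definition forest_weight (a : 'M[R]_N) (F : {set 'I_N * 'I_N}) : R :=
  \prod_(e in F) a e.2 e.1.

Definition theta (a : 'M[R]_N) (k : nat) (u w : 'I_N) : R :=
  \sum_(F : {set 'I_N * 'I_N} |
        [&& spanning_div_forest a F, #|F| == k & root_of F u w])
    forest_weight a F.

End Graph.

(* Main.v *)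
Require Import Defs.
From HB Require Import structures.
From mathcomp Require Import all_boot all_order all_algebra.
From mathcomp Require Import zify fingroup perm.
Set Implicit Arguments. Unset Strict Implicit. Unset Printing Implicit Defensive.
Import Order.TTheory GRing.Theory Num.Theory.
Local Open Scope ring_scope.

Definition gf N (f : 'I_N -> option 'I_N) (i : 'I_N) : 'I_N := odflt i (f i).

Definition vr {R : numDomainType} N (c o : 'I_N) (i : 'I_N) (x : option 'I_N) (j : 'I_N) : R :=
  if i == c then (j == o)%:R else
  match x with None => (j == i)%:R | Some k => (j == i)%:R - (j == k)%:R end.

Definition Vm (R : numDomainType) N (c o : 'I_N) (f : 'I_N -> option 'I_N) : 'M[R]_N :=
  \matrix_(i, j) vr c o i (f i) j.

Lemma iter_root N (f : 'I_N -> option 'I_N) r t : f r = None -> iter t (gf f) r = r.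
Proof. by move=> Hr; elim: t => //= t ->; rewrite /gf Hr. Qed.

Lemma L1 (R : numDomainType) N (c o : 'I_N) f : f c = None ->
  \det (Vm R c o f) = \det (Vm R c (gf f o) f).
Proof.
move=> Hc; rewrite /gf; case Efo: (f o) => [k|] //=.
have oc : o != c by apply/eqP => E; rewrite E Hc in Efo.
pose C := \matrix_(i,j) if i == c then Vm R c o f o j else Vm R c o f i j.
have -> := @determinant_multilinear _ _ (Vm R c o f) (Vm R c k f) C c 1 1.
- rewrite (@determinant_alternate _ _ C c o) ?mulr0 ?addr0 ?mul1r // 1?eq_sym //.
  by move=> j; rewrite !mxE eqxx (negbTE oc).
- apply/rowP => j; rewrite !mxE /vr eqxx (negbTE oc) Efo !mul1r.
  by rewrite addrC subrK.
- by apply/matrixP => i j; rewrite !mxE /vr eq_sym (negbTE (neq_lift c i)).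
- by apply/matrixP => i j; rewrite !mxE eq_sym (negbTE (neq_lift c i)).
Qed.

Lemma L1iter (R : numDomainType) N (c o : 'I_N) f t : f c = None ->
  \det (Vm R c o f) = \det (Vm R c (iter t (gf f) o) f).
Proof.
move=> Hc; elim: t => //= t ->; exact: L1.
Qed.

Lemma L2 (R : numDomainType) N (c x : 'I_N) f : f x = None -> x != c ->
  \det (Vm R c x f) = 0.
Proof.
move=> Hx xc; apply: (@determinant_alternate _ _ _ c x); first by rewrite eq_sym.
by move=> j; rewrite !mxE /vr eqxx (negbTE xc) Hx.
Qed.

Lemma L3 (R : numDomainType) N (c o : 'I_N) f x p : f c = None -> f x != None ->
  (0 < p)%N -> iter p (gf f) x = x -> \det (Vm R c o f) = 0.
Proof.
move=> Hc Hx p_gt0 Hp.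
set g := gf f; pose z j := iter j g x.
have zq q : iter (q * p) g x = x.
  by elim: q => // q IH; rewrite mulSn iterD IH.
have nr j : f (z j) != None.
  apply/negP => /eqP Hj.
  have jle : (j <= j.+1 * p)%N by exact: leq_trans (leqnSn j) (leq_pmulr _ p_gt0).
  have : iter (j.+1 * p) g x = z j.
    by rewrite -(subnK jle) iterD iter_root.
  by rewrite zq => E; rewrite -E in Hj; rewrite Hj in Hx.
have zc j : z j != c by apply/eqP => E; move: (nr j); rewrite E Hc.
have fz j : f (z j) = Some (z j.+1).
  by move: (nr j); rewrite /z iterS /g /gf; case: (f _).
pose u j := (delta_mx 0 (z j) : 'rV[R]_N).
pose y := \sum_(j < p) u j.
have yV : y *m Vm R c o f = 0.
  rewrite mulmx_suml.
  have rowj j : u j *m Vm R c o f = u j - u j.+1.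
    rewrite -rowE; apply/rowP => l; rewrite !mxE /vr (negbTE (zc j)) fz.
    by rewrite !eqxx.
  under eq_bigr do rewrite rowj.
  have -> : \sum_(j < p) (u j - u j.+1) = - \sum_(j < p) (u j.+1 - u j).
    by rewrite -sumrN; apply: eq_bigr => j _; rewrite opprB.
  rewrite -(big_mkord xpredT (fun j => u j.+1 - u j)) telescope_sumr //.
  by rewrite /u /z Hp subrr oppr0.
have y0 : y 0 x != 0.
  rewrite summxE; under eq_bigr do rewrite mxE eqxx /=.
  rewrite -natr_sum pnatr_eq0 -lt0n (bigD1 (Ordinal p_gt0)) //= /z /= eqxx.
  by [].
have := congr1 (mulmx^~ (\adj (Vm R c o f))) yV.
rewrite -mulmxA mul_mx_adj mul0mx mul_mx_scalar => /matrixP /(_ 0 x).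
rewrite !mxE => /eqP; rewrite mulf_eq0 (negbTE y0) orbF => /eqP //.
Qed.

Lemma iter_fix (T : Type) (g : T -> T) x t : g x = x -> iter t g x = x.
Proof. by move=> Hx; elim: t => //= t ->. Qed.

Lemma L4 (R : numDomainType) N (c : 'I_N) f : f c = None ->
  (forall j, f (iter N (gf f) j) = None) -> \det (Vm R c c f) = 1.
Proof.
move=> Hc Hac; set g := gf f.
have noloop i : f i != Some i.
  apply/eqP => Hi; have gi : g i = i by rewrite /g /gf Hi.
  by move: (Hac i); rewrite -/g iter_fix // Hi.
pose b t i : nat := (f (iter t g i) != None).
pose h i := (\sum_(t < N) b t i)%N.
have hS i k : f i = Some k -> h i = (h k).+1.
  move=> Hi.
  have E : (b 0%N i + \sum_(t<N) b t.+1 i = \sum_(t<N) b t i + b N i)%N.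
    by rewrite -(big_ord_recr N (fun t => b t i)) big_ord_recl.
  have bN : b N i = 0%N by rewrite /b Hac.
  rewrite /h; move: E; rewrite bN addn0 => <-.
  rewrite /b /= Hi /= add1n; congr _.+1; apply: eq_bigr => t _.
  by rewrite /b -iterS iterSr /g /gf Hi.
have Vcase (s : {perm 'I_N}) i : Vm R c c f i (s i) != 0 -> s i != i -> f i = Some (s i).
  rewrite mxE /vr; case: (eqVneq i c) => [-> | ic].
    by rewrite pnatr_eq0 eqb0 negbK => /eqP ->; rewrite eqxx.
  case Efi: (f i) => [k|]; last by rewrite pnatr_eq0 eqb0 negbK => /eqP ->; rewrite eqxx.
  move=> H nsi; move: H; rewrite (negbTE nsi) sub0r oppr_eq0 pnatr_eq0 eqb0 negbK.
  by move=> /eqP ->.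
rewrite /determinant (bigD1 1%g) //= [X in _ + X]big1 ?addr0.
  rewrite odd_perm1 expr0 mul1r; apply: big1 => i _.
  rewrite perm1 mxE /vr; case: (eqVneq i c) => [_|ic]; first by [].
  case Efi: (f i) => [k|]; last by rewrite eqxx.
  have ki : (i == k) = false by apply/eqP => E; move: (noloop i); rewrite Efi E eqxx.
  by rewrite eqxx ki subr0.
move=> s sn1.
case: (boolP [exists i, Vm R c c f i (s i) == 0]) => [/existsP [i /eqP Hi] | H].
  by rewrite (bigD1 i) //= Hi mul0r mulr0.
exfalso; move: H; rewrite negb_exists => /forallP Hnz.
case: (boolP [exists i, s i != i]) => [/existsP [i0 Hi0] | H]; last first.
  move: H; rewrite negb_exists => /forallP Hid; move/eqP: sn1; apply.
  by apply/permP => i; rewrite perm1; move: (Hid i); rewrite negbK => /eqP.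
have Hle i : (h (s i) <= h i)%N.
  case: (eqVneq (s i) i) => [-> //| nsi].
  by rewrite (hS _ _ (Vcase s i (Hnz i) nsi)).
have Hlt : (h (s i0) < h i0)%N by rewrite (hS _ _ (Vcase s i0 (Hnz i0) Hi0)).
have Hsum : (\sum_i h i = \sum_i h (s i))%N by rewrite (reindex_inj (@perm_inj _ s)).
move: Hsum; rewrite (bigD1 i0) //= [X in _ = X](bigD1 i0) //=.
have : (\sum_(i | i != i0) h (s i) <= \sum_(i | i != i0) h i)%N by apply: leq_sum.
by move=> Hs E; move: (leq_add Hlt Hs); rewrite E addSn ltnn.
Qed.

Lemma order_leN N (g : 'I_N -> 'I_N) j : (fingraph.order g j <= N)%N.
Proof. by rewrite /fingraph.order; apply: leq_trans (max_card _) _; rewrite card_ord. Qed.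

Lemma Dchar (R : numDomainType) N (c o : 'I_N) f : f c = None ->
  \det (Vm R c o f) =
  ([forall j, f (iter N (gf f) j) == None] && (iter N (gf f) o == c))%:R.
Proof.
move=> Hc; set g := gf f.
case: (boolP [forall j, f (iter N g j) == None]) => [/forallP Hac | Hn] /=.
  rewrite (L1iter _ _ N Hc) -/g.
  have fr : f (iter N g o) = None by apply/eqP.
  case: (eqVneq (iter N g o) c) => [-> | rc].
    by apply: L4 => // j; apply/eqP.
  by rewrite (L2 _ fr rc).
move: Hn; rewrite negb_forall => /existsP [j Hj].
have := looping_order g j; rewrite /looping => /trajectP [i lti E].
have iN : (i <= N)%N by apply: leq_trans (ltnW lti) (order_leN g j).
have p_gt0 : (0 < fingraph.order g j - i)%N by rewrite subn_gt0.
have Hper0 : iter (fingraph.order g j - i) g (iter i g j) = iter i g j.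
  by rewrite -iterD subnK ?(ltnW lti).
have Ex : iter N g j = iter (N - i) g (iter i g j) by rewrite -iterD subnK.
apply: (L3 _ _ Hc Hj p_gt0).
by rewrite -/g Ex -iterD addnC iterD Hper0.
Qed.

Lemma det_expand (R : comPzRingType) n (J : finType) (w : 'I_n -> J -> R)
  (v : 'I_n -> J -> 'I_n -> R) :
  \det (\matrix_(i, j) \sum_(x : J) w i x * v i x j) =
  \sum_(F : {ffun 'I_n -> J}) (\prod_i w i (F i)) * \det (\matrix_(i, j) v i (F i) j).
Proof.
rewrite /determinant.
transitivity (\sum_(s : {perm 'I_n}) \sum_(F : {ffun 'I_n -> J})
   (-1) ^+ s * ((\prod_i w i (F i)) * \prod_i v i (F i) (s i))).
  apply: eq_bigr => s _.
  rewrite (eq_bigr (fun i => \sum_x w i x * v i x (s i))); last by move=> i _; rewrite mxE.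
  rewrite bigA_distr_bigA big_distrr; apply: eq_bigr => F _; rewrite big_split //.
rewrite exchange_big; apply: eq_bigr => F _; rewrite big_distrr; apply: eq_bigr => s _.
rewrite mulrCA; congr (_ * (_ * _)); apply: eq_bigr => i _; by rewrite mxE.
Qed.

Lemma sum_option (V : nmodType) (T : finType) (t0 : T) (F : option T -> V) :
  \sum_x F x = F None + \sum_(y : T) F (Some y).
Proof.
rewrite (bigD1 None) //=; congr (_ + _).
rewrite (reindex (fun y => Some y)) /=; first by apply: eq_bigl.
by exists (odflt t0) => // [[y|]].
Qed.

Lemma cof_row (R : comPzRingType) n (A : 'M[R]_n) i j :
  cofactor A i j = \det (\matrix_(k, l) if k == i then (l == j)%:R else A k l).
Proof.
rewrite (expand_det_row _ i) (bigD1 j) //= big1 ?addr0.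
  rewrite !mxE !eqxx mul1r /cofactor; congr (_ * \det _).
  by apply/matrixP => k l; rewrite !mxE eq_sym (negbTE (neq_lift i k)).
by move=> l lj; rewrite !mxE eqxx (negbTE lj) mul0r.
Qed.

Definition wt (R : numDomainType) N (a : 'M[R]_N) (c i : 'I_N) (x : option 'I_N) : {poly R} :=
  if i == c then (x == None)%:R else match x with None => 'X | Some k => (a i k)%:P end.

Lemma M1eq (R : numDomainType) N (a : 'M[R]_N) (a_diag : forall i, a i i = 0) (c o i j : 'I_N) :
  (if i == c then (j == o)%:R else ('X%:M + map_mx polyC (\matrix_(i, j) ((i == j)%:R * (\sum_(k < N) a i k) - a i j))) i j)
  = \sum_x wt a c i x * (vr c o i x j)%:P.
Proof.
rewrite (sum_option c) /wt /vr; case: (eqVneq i c) => [_|ic].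
  rewrite big1 ?addr0 ?mul1r ?polyC_natr //.
  by move=> k _; rewrite mul0r.
rewrite !mxE.
rewrite (eq_bigr (fun y => (a i y * ((j == i)%:R - (j == y)%:R))%:P)); last first.
  by move=> y _; rewrite polyCM.
have E1 : \sum_k (a i k * ((j == i)%:R - (j == k)%:R)) = (j == i)%:R * (\sum_(k < N) a i k) - a i j.
  rewrite (eq_bigr (fun k => (j == i)%:R * a i k - a i k * (j == k)%:R)); last first.
    by move=> k _; rewrite mulrBr mulrC.
  rewrite sumrB -big_distrr /= [X in _ - X](bigD1 j) //= [\sum_(k < N | k != j) _]big1 ?addr0; last first.
    by move=> k kj; rewrite eq_sym (negbTE kj) mulr0.
  by rewrite eqxx mulr1.
rewrite -(big_morph _ (@polyCD R) (@polyC0 R)) E1.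
case: (eqVneq i j) => [->|ij].
  by rewrite !mulr1 mul1r mulr1n.
by rewrite !mul0r mulr0 mulr0n !add0r.
Qed.

Definition wc (R : numDomainType) N (a : 'M[R]_N) (c i : 'I_N) (x : option 'I_N) : R :=
  if i == c then (x == None)%:R else match x with None => 1 | Some k => a i k end.

Definition mF N (c : 'I_N) (F : 'I_N -> option 'I_N) : nat :=
  (\sum_i ((i != c) && (F i == None) : nat))%N.

Lemma prod_wt (R : numDomainType) N (a : 'M[R]_N) (c : 'I_N) (F : 'I_N -> option 'I_N) :
  \prod_i wt a c i (F i) = (\prod_i wc a c i (F i)) *: 'X ^+ (mF c F).
Proof.
rewrite (eq_bigr (fun i => 'X ^+ ((i != c) && (F i == None)) * (wc a c i (F i))%:P)).
  rewrite big_split /= prodrXr -(big_morph _ (@polyCM R) (@polyC1 R)).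
  by rewrite mulrC mul_polyC.
move=> i _; rewrite /wt /wc; case: (eqVneq i c) => [_|ic] /=.
  by rewrite expr0 mul1r polyC_natr.
by case: (F i) => [k|] /=; rewrite ?expr0 ?expr1 ?mul1r ?mulr1.
Qed.

Lemma hcoef (R : numDomainType) N (a : 'M[R]_N) (a_diag : forall i, a i i = 0) (c o : 'I_N) (n : nat) :
  (\adj ('X%:M + map_mx polyC (\matrix_(i, j) ((i == j)%:R * (\sum_(k < N) a i k) - a i j))) o c)`_n
  = \sum_(F : {ffun 'I_N -> option 'I_N})
      (\prod_i wc a c i (F i)) * \det (Vm R c o F) * (n == mF c F)%:R.
Proof.
rewrite mxE cof_row.
rewrite (_ : \matrix_(k, l) _ = \matrix_(i, j) \sum_x wt a c i x * (vr c o i x j)%:P); last first.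
  by apply/matrixP => i j; rewrite !mxE -M1eq // !mxE.
rewrite det_expand coef_sum; apply: eq_bigr => F _.
rewrite (_ : \matrix_(i, j) _ = map_mx polyC (Vm R c o F)); last first.
  by apply/matrixP => i j; rewrite !mxE.
rewrite det_map_mx prod_wt -scalerAl mulrC mul_polyC scalerA coefZ coefXn.
by [].
Qed.

Definition phi N (F : 'I_N -> option 'I_N) : {set 'I_N * 'I_N} := [set e | F e.2 == Some e.1].

Lemma arc_phi N (F : 'I_N -> option 'I_N) x y : arcrel (phi F) x y = (F y == Some x).
Proof. by rewrite /arcrel inE. Qed.

Lemma indeg_phi N (F : 'I_N -> option 'I_N) v : indeg (phi F) v = (F v != None).
Proof.
rewrite /indeg; case E: (F v) => [k|] /=.
  rewrite (_ : [set u | (u, v) \in phi F] = [set k]) ?cards1 //.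
  by apply/setP => u; rewrite !inE E /= eq_sym.
rewrite (_ : [set u | (u, v) \in phi F] = set0) ?cards0 //.
by apply/setP => u; rewrite !inE E.
Qed.

Lemma conn_iter N (F : 'I_N -> option 'I_N) x y :
  connect (arcrel (phi F)) x y -> exists k, iter k (gf F) y = x.
Proof.
move/connectP => [p Hp ->]; elim: p x Hp => [|z p IH] x /=; first by exists 0%N.
move/andP => [Hxz Hp]; have [k Hk] := IH z Hp; exists k.+1.
by rewrite iterS Hk /gf; move: Hxz; rewrite arc_phi => /eqP ->.
Qed.

Lemma iter_conn N (F : 'I_N -> option 'I_N) k y :
  connect (arcrel (phi F)) (iter k (gf F) y) y.
Proof.
elim: k => [|k IH] /=; first exact: connect0.
apply: connect_trans _ IH; rewrite /gf; case E: (F _) => [p|] /=.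
  by apply: connect1; rewrite arc_phi E.
exact: connect0.
Qed.

Lemma conn_N N (F : 'I_N -> option 'I_N) x y :
  connect (arcrel (phi F)) x y -> F x = None -> iter N (gf F) y = x.
Proof.
move=> /conn_iter [k Hk] Fx.
have Hc : fconnect (gf F) y x by rewrite -Hk; apply: fconnect_iter.
have Hi := iter_findex Hc.
have Hlt : (findex (gf F) y x <= N)%N.
  exact: ltnW (leq_trans (findex_max Hc) (order_leN _ _)).
have -> : iter N (gf F) y = iter (N - findex (gf F) y x) (gf F) (iter (findex (gf F) y x) (gf F) y).
  by rewrite -iterD subnK.
by rewrite Hi iter_root.
Qed.

Lemma acyc_eq N (F : 'I_N -> option 'I_N) :
  [forall w, exists r, (indeg (phi F) r == 0)%N && connect (arcrel (phi F)) r w]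
  = [forall j, F (iter N (gf F) j) == None].
Proof.
apply/forallP/forallP => H j.
  have /existsP [r /andP [Hr Hc]] := H j.
  move: Hr; rewrite indeg_phi eqb0 negbK => /eqP Fr.
  by rewrite (conn_N Hc Fr) Fr.
apply/existsP; exists (iter N (gf F) j).
by rewrite indeg_phi (H j) iter_conn.
Qed.

Lemma card_phi N (F : 'I_N -> option 'I_N) :
  #|phi F| = (\sum_i (F i != None : nat))%N.
Proof.
rewrite -sum1_card big_mkcond /=.
have -> : (\sum_(e : 'I_N * 'I_N) (if e \in phi F then 1 else 0) =
   \sum_k \sum_i (if (k, i) \in phi F then 1 else 0))%N.
  by rewrite pair_bigA; apply: eq_bigr => -[k i].
rewrite exchange_big; apply: eq_bigr => i _ /=.
case E: (F i) => [k|] /=.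
  rewrite (bigD1 k) //= inE E eqxx big1 // => k' k'k.
  by rewrite inE E /=; case: eqP => // -[E']; rewrite E' eqxx in k'k.
by rewrite big1 // => k' _; rewrite inE E.
Qed.

Lemma card_phi_mF N (F : 'I_N -> option 'I_N) (c : 'I_N) : F c = None ->
  (#|phi F| + mF c F)%N = N.-1.
Proof.
move=> Fc; rewrite card_phi /mF -big_split /=.
rewrite (eq_bigr (fun i => (i != c : nat))); last first.
  move=> i _; case: (eqVneq i c) => [->|ic]; first by rewrite Fc.
  by case: (F i).
rewrite -big_mkcond /= sum1_card (cardC1 c) card_ord //.
Qed.

Lemma fw_phi (R : numDomainType) N (a : 'M[R]_N) (F : 'I_N -> option 'I_N) :
  forest_weight a (phi F) = \prod_i match F i with None => 1 | Some k => a i k end.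
Proof.
rewrite /forest_weight big_mkcond /=.
have -> : \prod_(e : 'I_N * 'I_N) (if e \in phi F then a e.2 e.1 else 1) =
   \prod_k \prod_i (if (k, i) \in phi F then a i k else 1).
  by rewrite pair_bigA; apply: eq_bigr => -[k i].
rewrite exchange_big; apply: eq_bigr => i _ /=.
case E: (F i) => [k|] /=.
  rewrite (bigD1 k) //= inE E eqxx big1 ?mulr1 // => k' k'k.
  by rewrite inE E /=; case: eqP => // -[E']; rewrite E' eqxx in k'k.
by rewrite big1 // => k' _; rewrite inE E.
Qed.

Lemma perF (R : numDomainType) N (a : 'M[R]_N) (a_nneg : forall i j, 0 <= a i j)
  (c o : 'I_N) (F : 'I_N -> option 'I_N) (n : nat) : (n < N)%N ->
  (\prod_i wc a c i (F i)) * \det (Vm R c o F) * (n == mF c F)%:R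
  = if [&& spanning_div_forest a (phi F), #|phi F| == (N - n - 1)%N & root_of (phi F) c o]
    then forest_weight a (phi F) else 0.
Proof.
move=> hn.
case Fc: (F c) => [k0|].
  rewrite (bigD1 c) //= {1}/wc eqxx Fc /= !mul0r.
  by rewrite /root_of indeg_phi Fc /= !andbF.
have Kfw : \prod_i wc a c i (F i) = forest_weight a (phi F).
  rewrite fw_phi; apply: eq_bigr => i _; rewrite /wc.
  by case: (eqVneq i c) => [->|ic]; rewrite ?Fc.
rewrite Kfw Dchar // -acyc_eq.
rewrite /spanning_div_forest /root_of indeg_phi Fc /=.
have -> : [forall v, (indeg (phi F) v <= 1)%N] = true.
  by apply/forallP => v; rewrite indeg_phi; case: (F v).
set P := [forall e in phi F, 0 < a e.2 e.1].
set A := [forall w, exists r, _].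
case: (boolP P) => HP /=; last first.
  move: HP; rewrite negb_forall_in => /existsP [[k i] /andP [Hin Hnpos]].
  have aik : a i k = 0.
    by move: Hnpos; rewrite lt0r a_nneg andbT negbK => /eqP.
  by rewrite /forest_weight (bigD1 (k, i)) //= aik !mul0r.
case: (boolP A) => HA /=; last by rewrite mulr0 mul0r.
have conn_eq : connect (arcrel (phi F)) c o = (iter N (gf F) o == c).
  apply/idP/eqP => [Hc' | <-]; [exact: conn_N Hc' Fc | exact: iter_conn].
have card_eq : (#|phi F| == (N - n - 1)%N) = (n == mF c F).
  by have := card_phi_mF Fc; move=> H; apply/eqP/eqP; lia.
rewrite conn_eq card_eq.
by case: (iter N (gf F) o == c); case: (n == mF c F); rewrite /= ?mulr1 ?mulr0 ?mul0r.
Qed.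

Lemma reindex_phi (V : nmodType) N (G : {set 'I_N * 'I_N} -> V) :
  (forall S, G S != 0 -> forall v, (indeg S v <= 1)%N) ->
  \sum_(F : {ffun 'I_N -> option 'I_N}) G (phi F) = \sum_S G S.
Proof.
move=> HG.
have inj : injective (fun F : {ffun 'I_N -> option 'I_N} => phi F).
  move=> F1 F2 /= E; apply/ffunP => i; case E1: (F1 i) => [k|].
    have : (k, i) \in phi F1 by rewrite inE E1.
    by rewrite E inE => /eqP ->.
  case E2: (F2 i) => [k|] //.
  have : (k, i) \in phi F2 by rewrite inE E2.
  by rewrite -E inE E1.
rewrite [RHS](bigID (fun S => S \in [set phi F | F : {ffun 'I_N -> option 'I_N}])) /=.
rewrite [X in _ = _ + X]big1 ?addr0; last first.
  move=> S HS; apply/eqP; apply: contraR HS => HS.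
  have H1 := HG S HS.
  apply/imsetP; exists [ffun i => [pick k | (k, i) \in S]] => //.
  apply/setP => -[k i]; rewrite inE ffunE /=.
  case: pickP => [k' Hk' | none]; last by rewrite none.
  apply/idP/eqP => [H | [<-] //]; congr Some.
  have /card_le1_eqP Hle := H1 i.
  by apply: Hle; rewrite inE.
rewrite big_imset /=; last by move=> x y _ _; apply: inj.
by apply: eq_bigl => F; rewrite inE.
Qed.

Theorem lemma2 (R : numDomainType) (N : nat) (a : 'M[R]_N)
  (a_nneg : forall i j, 0 <= a i j) (a_diag : forall i, a i i = 0)
  (c o : 'I_N) :
  let h : {poly R} := \adj ('X%:M + map_mx polyC (laplacian a)) o c in
  forall i : 'I_N, h`_i = theta a (N - i - 1) c o.
Proof.
move=> h n; rewrite /h /laplacian hcoef //.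
rewrite (eq_bigr (fun F : {ffun 'I_N -> option 'I_N} =>
  if [&& spanning_div_forest a (phi F), #|phi F| == (N - n - 1)%N & root_of (phi F) c o]
  then forest_weight a (phi F) else 0)); last by move=> F _; apply: perF.
rewrite /theta big_mkcond /=.
rewrite (@reindex_phi _ _ (fun S => if [&& spanning_div_forest a S, #|S| == (N - n - 1)%N & root_of S c o]
  then forest_weight a S else 0)); first by rewrite [RHS]big_mkcond.
move=> S; case: ifP => [/and3P [/and3P [_ /forallP H _] _ _] _ | _]; last by rewrite eqxx.
exact: H.
Qed.
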